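(* Let $\Pi=\{321,312,123,231\}$ (consecutive patterns). For $k\ge 1$, $$I_{2k+1}(\Pi;q)=2\,q^k C_k(q),\qquad I_{2k}(\Pi;q)=q^{k-1}C_{k-1}(q)+q^kC_k(q).$$
   Context: For $\sigma\in S_3$ and $\pi=\pi_1\cdots\pi_n\in S_n$, $\pi$ contains the consecutive pattern $\sigma$ if there is an index $i$ with $1\le i\le n-2$ such that $\pi_i\pi_{i+1}\pi_{i+2}$ is order-isomorphic to $\sigma$; otherwise $\pi$ avoids $\sigma$. $\mathrm{Av}_n(\Pi)$ is the set of $\pi\in S_n$ avoiding every pattern in $\Pi$. $\mathrm{inv}(\pi)=\#\{(i,j):i<j,\ \pi_i>\pi_j\}$ and $I_n(\Pi;q)=\sum_{\pi\in\mathrm{Av}_n(\Pi)}q^{\mathrm{inv}(\pi)}$. A Dyck path of length $k$ is a lattice path from $(0,0)$ to $(k,k)$ with unit steps $(1,0)$ and $(0,1)$ containing no point $(x,y)$ with $x>y$; its area is the number of unit squares lying below the path and completely above the diagonal. $C_k(q)=\sum_P q^{\mathrm{area}(P)}$ over Dyck paths $P$ of length $k$ (so $C_0(q)=1$). *)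

(* Defs.v *)
From HB Require Import structures.
From mathcomp Require Import all_boot all_order all_algebra all_fingroup.
Set Implicit Arguments. Unset Strict Implicit. Unset Printing Implicit Defensive.
Import GRing.Theory.
Local Open Scope ring_scope.

(* One-line notation of a permutation pi in S_n: the word pi_1 ... pi_n
   (values 0..n-1, which does not affect order-isomorphism). *)
Definition perm_word (n : nat) (p : 'S_n) : seq nat :=
  [seq val (p j) | j <- enum 'I_n].

Definition occurs_at (sigma w : seq nat) (i : nat) : bool :=
  [forall a : 'I_3, forall b : 'I_3,
     (nth 0 w (i + a) < nth 0 w (i + b))%N == (nth 0 sigma a < nth 0 sigma b)%N].

Definition contains_consec (sigma w : seq nat) : bool :=
  has (fun i => (i + 2 < size w)%N && occurs_at sigma w i) (iota 0 (size w)).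

Definition avoids_all (Pi : seq (seq nat)) (n : nat) (p : 'S_n) : bool :=
  all (fun sigma => ~~ contains_consec sigma (perm_word p)) Pi.

Definition inv_num (n : nat) (p : 'S_n) : nat :=
  #|[set ij : 'I_n * 'I_n | (ij.1 < ij.2)%N && (p ij.2 < p ij.1)%N]|.

Definition Ipoly (Pi : seq (seq nat)) (n : nat) : {poly int} :=
  \sum_(p : 'S_n | avoids_all Pi p) 'X^(inv_num p).

(* Lattice paths: true = north step (0,1), false = east step (1,0). *)
Definition n_north (s : seq bool) : nat := count id s.
Definition n_east (s : seq bool) : nat := count negb s.

Definition is_dyck (k : nat) (s : seq bool) : bool :=
  [&& n_north s == k, n_east s == k &
      all (fun m => n_east (take m s) <= n_north (take m s))%N
          (iota 0 (size s).+1)].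

(* Area: for each east step from (x,y) to (x+1,y), the unit squares of column x
   that lie below the path and completely above the diagonal are those
   [x,x+1]x[j,j+1] with x+1 <= j < y, i.e. y - (x+1) of them. *)
Fixpoint area_aux (s : seq bool) (x y : nat) : nat :=
  match s with
  | [::] => 0
  | true :: s' => area_aux s' x y.+1
  | false :: s' => (y - x.+1) + area_aux s' x.+1 y
  end%N.
Definition area (s : seq bool) : nat := area_aux s 0 0.

Definition Cq (k : nat) : {poly int} :=
  \sum_(t : (k.*2).-tuple bool | is_dyck k t) 'X^(area t).

Definition PiSet : seq (seq nat) :=
  [:: [:: 3; 2; 1]; [:: 3; 1; 2]; [:: 1; 2; 3]; [:: 2; 3; 1]]%N.

(* Main.v *)
Require Import Defs.
From HB Require Import structures.
From mathcomp Require Import all_boot all_order all_algebra all_fingroup.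
From mathcomp Require Import zify.
Set Implicit Arguments. Unset Strict Implicit. Unset Printing Implicit Defensive.
Import GRing.Theory.
Open Scope nat_scope.


Definition cnt (b : bool) (f : nat -> bool) (v : nat) : nat := \sum_(u < v) (f u == b).
Definition pos (f : nat -> bool) v := if f v then 2 * cnt true f v else 2 * cnt false f v + 1.

Lemma cnt0 b f : cnt b f 0 = 0. Proof. by rewrite /cnt big_ord0. Qed.
Lemma cntS b f v : cnt b f v.+1 = cnt b f v + (f v == b).
Proof. by rewrite /cnt big_ord_recr. Qed.
Lemma cntTF f v : cnt true f v + cnt false f v = v.
Proof. elim: v => [|v IH]; first by rewrite !cnt0. rewrite !cntS; case: (f v) => /=; lia. Qed.
Lemma cnt_mono b f u v : u <= v -> cnt b f u <= cnt b f v.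
Proof.
move=> /subnK <-; elim: (v - u) => [|w IH]; first by rewrite add0n.
rewrite addSn cntS; lia.
Qed.
Lemma cnt_lt b f u v : u < v -> f u = b -> cnt b f u < cnt b f v.
Proof.
move=> uv fu; apply: (@leq_trans (cnt b f u.+1)); last exact: cnt_mono.
by rewrite cntS fu eqxx addn1.
Qed.
Lemma cnt_ext b f g v : (forall u, u < v -> f u = g u) -> cnt b f v = cnt b g v.
Proof. by move=> H; apply: eq_bigr => i _; rewrite H. Qed.

Lemma pos_odd f v : odd (pos f v) = ~~ f v.
Proof. rewrite /pos; case: (f v) => /=; first by rewrite oddM. by rewrite oddD oddM. Qed.

Lemma pos_lt f u v : u < v -> f u = f v -> pos f u < pos f v.
Proof.
move=> uv e; rewrite /pos -e; case fu: (f u).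
- by have := cnt_lt uv fu; lia.
- by have := cnt_lt uv fu; lia.
Qed.

Lemma pos_inj f u v : pos f u = pos f v -> u = v.
Proof.
move=> e; have ef : f u = f v by apply: negb_inj; rewrite -!pos_odd e.
case: (ltngtP u v) => // h.
- by have := pos_lt h ef; rewrite e ltnn.
- by have := pos_lt h (esym ef); rewrite e ltnn.
Qed.

Lemma pos_mono f u v : pos f u < pos f v -> odd (pos f u) = odd (pos f v) -> u < v.
Proof.
move=> lt ep; have ef : f u = f v by apply: negb_inj; rewrite -!pos_odd ep.
case: (ltngtP u v) => // h.
- by have := pos_lt h (esym ef); lia.
- by move: lt; rewrite h ltnn.
Qed.

Definition counts n f := 2 * cnt false f n <= n <= 2 * cnt false f n + 1.

Lemma pos_bound n f v : counts n f -> v < n -> pos f v < n.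
Proof.
rewrite /counts /pos => /andP [h1 h2] vn; have := cntTF f n; have := cntTF f v.
case fv: (f v).
- have := cnt_lt vn fv; lia.
- have := cnt_lt vn fv; lia.
Qed.

Definition posI n f (v : 'I_n) : 'I_n := odflt v (insub (pos f v)).

Lemma posIE n f v : counts n f -> val (@posI n f v) = pos f v.
Proof.
move=> c; rewrite /posI; case: insubP => [w _ -> //|].
by rewrite (pos_bound c (ltn_ord v)).
Qed.

Lemma posI_inj n f : counts n f -> injective (@posI n f).
Proof. by move=> c u v e; apply: val_inj; apply: (@pos_inj f); rewrite -!posIE // e. Qed.

Definition mkperm n (h : 'I_n -> 'I_n) : {perm 'I_n} :=
  match injectiveP h with ReflectT H => perm H | ReflectF _ => 1%g end.

Lemma mkpermE n (h : 'I_n -> 'I_n) : injective h -> forall x, mkperm h x = h x.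
Proof.
move=> H x; rewrite /mkperm; case: injectiveP => [H'|]; first by rewrite permE.
by move=> /(_ H).
Qed.

Definition psi n f : {perm 'I_n} := ((mkperm (@posI n f))^-1)%g.

Lemma psi_inv n f v : counts n f -> val (((psi n f)^-1)%g v) = pos f v.
Proof. by move=> c; rewrite /psi invgK mkpermE ?posIE //; apply: posI_inj. Qed.

Lemma pos_psi n f x : counts n f -> pos f (psi n f x) = x.
Proof. by move=> c; rewrite -psi_inv // permK. Qed.

Lemma psi_lt n f : counts n f -> forall x : 'I_n, psi n f x < n.
Proof. by move=> c x. Qed.

Definition PW n (p : 'S_n) i := nth 0 (perm_word p) i.

Lemma PWE n (p : 'S_n) i (Hi : i < n) : PW p i = p (Ordinal Hi).
Proof.
rewrite /PW /perm_word (nth_map (Ordinal Hi)) ?size_enum_ord //.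
by congr (nat_of_ord (p _)); apply: val_inj; rewrite /= nth_enum_ord.
Qed.

Lemma PW_ord n (p : 'S_n) (x : 'I_n) : PW p x = p x.
Proof. by rewrite (PWE p (ltn_ord x)); congr (nat_of_ord (p _)); apply: val_inj. Qed.

Lemma PW_inj n (p : 'S_n) i j : i < n -> j < n -> PW p i = PW p j -> i = j.
Proof.
move=> hi hj; rewrite (PWE p hi) (PWE p hj) => /val_inj /perm_inj [] //.
Qed.

Lemma size_pw n (p : 'S_n) : size (perm_word p) = n.
Proof. by rewrite /perm_word size_map size_enum_ord. Qed.

Lemma forall3 (P : 'I_3 -> bool) :
  [forall a, P a] = [&& P (@Ordinal 3 0 isT), P (@Ordinal 3 1 isT) & P (@Ordinal 3 2 isT)].
Proof.
apply/forallP/and3P => [H|[h0 h1 h2]]; first by rewrite !H.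
case=> [[|[|[|//]]] h].
- by rewrite (_ : Ordinal h = Ordinal (isT : 0 < 3)) //; apply: val_inj.
- by rewrite (_ : Ordinal h = Ordinal (isT : 1 < 3)) //; apply: val_inj.
- by rewrite (_ : Ordinal h = Ordinal (isT : 2 < 3)) //; apply: val_inj.
Qed.

Lemma occ_w sigma w i :
  occurs_at sigma w i = occurs_at sigma [:: nth 0 w i; nth 0 w i.+1; nth 0 w i.+2] 0.
Proof. by rewrite /occurs_at !forall3 /= !addn0 !addn1 !addn2. Qed.

Definition good x y z := (x < z) && ((x < y) != (y < z)).

Lemma good_occ x y z : x != y -> y != z -> x != z ->
  [&& ~~ occurs_at [:: 3; 2; 1] [:: x; y; z] 0, ~~ occurs_at [:: 3; 1; 2] [:: x; y; z] 0,
      ~~ occurs_at [:: 1; 2; 3] [:: x; y; z] 0 & ~~ occurs_at [:: 2; 3; 1] [:: x; y; z] 0]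
  = good x y z.
Proof.
rewrite /occurs_at !forall3 /= /good.
move=> hxy hyz hxz.
case: (ltngtP x y) hxy => // h1 _; case: (ltngtP y z) hyz => // h2 _;
  case: (ltngtP x z) hxz => // h3 _; rewrite ?ltnn //=; lia.
Qed.

Lemma contains_iff sigma w :
  ~~ contains_consec sigma w <-> (forall i, i.+2 < size w -> ~~ occurs_at sigma w i).
Proof.
rewrite /contains_consec; split.
- move=> /hasPn H i hi; have := H i; rewrite mem_iota add0n.
  by rewrite (_ : i + 2 = i.+2) ?addn2 // hi (ltnW (ltnW hi)) => /(_ isT).
- move=> H; apply/hasPn => i _; rewrite addn2; case: ltnP => //= hi; exact: H.
Qed.

Lemma avoidsP n (p : 'S_n) : avoids_all PiSet p <->
  (forall i, i.+2 < n -> good (PW p i) (PW p i.+1) (PW p i.+2)).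
Proof.
rewrite /avoids_all /PiSet /= andbT.
have dist : forall i j, i < n -> j < n -> i != j -> PW p i != PW p j.
  by move=> i j hi hj; apply: contra => /eqP /PW_inj -> //.
split.
- move=> /and4P [h1 h2 h3 h4] i hi.
  move: h1 h2 h3 h4; rewrite !contains_iff !size_pw => h1 h2 h3 h4.
  rewrite -good_occ; last (apply: dist; lia); last (apply: dist; lia); last (apply: dist; lia).
  by rewrite -!occ_w h1 ?h2 ?h3 ?h4.
- move=> H; apply/and4P; split; apply/contains_iff => i; rewrite size_pw => hi;
  (have := H i hi; rewrite -good_occ -?occ_w; try (apply: dist; lia));
  by case/and4P.
Qed.

Definition Inc n (P : nat -> nat) := forall i, i.+2 < n -> P i < P i.+2.
Definition Alt n d (P : nat -> nat) := forall i, i.+1 < n -> (P i < P i.+1) = (d == ~~ odd i).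
Definition upstart n (p : 'S_n) := PW p 0 < PW p 1.

Lemma classP n (p : 'S_n) d : 1 < n ->
  (avoids_all PiSet p && (upstart p == d)) <-> (Inc n (PW p) /\ Alt n d (PW p)).
Proof.
move=> n1; split.
- move=> /andP [/avoidsP H /eqP ud]; split.
  + by move=> i hi; case/andP: (H i hi).
  + rewrite /Alt; elim=> [|i IH] hi; first by move: ud; rewrite /upstart /= => ->; case: (d).
    have := H i hi; case/andP => _; rewrite IH ?(ltnW hi) //=.
    case: (PW p i.+1 < PW p i.+2); by case: d {ud IH}; case: (odd i).
- move=> [hI hA]; apply/andP; split.
  + apply/avoidsP => i hi; rewrite /good hI //= hA ?(ltnW hi) // hA //.
    by rewrite /=; case: d {hA}; case: (odd i).
  + by rewrite /upstart hA //; case: d {hA}.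
Qed.

Lemma pos_even f u j : pos f u = 2 * j -> f u /\ cnt true f u = j.
Proof. rewrite /pos; case: (f u) => h; split => //; lia. Qed.
Lemma pos_oddv f u j : pos f u = 2 * j + 1 -> f u = false /\ cnt false f u = j.
Proof. rewrite /pos; case: (f u) => h; split => //; lia. Qed.

Lemma psi_spec n f i (hi : i < n) : counts n f ->
  PW (psi n f) i < n /\ pos f (PW (psi n f) i) = i.
Proof. by move=> c; rewrite (PWE _ hi) pos_psi. Qed.

Lemma psi_at n f u : counts n f -> u < n -> PW (psi n f) (pos f u) = u.
Proof.
move=> c hu; have hp := pos_bound c hu.
have [h1 h2] := psi_spec hp c; exact: (pos_inj h2).
Qed.

Lemma psi_inc n f : counts n f -> Inc n (PW (psi n f)).
Proof.
move=> c i hi; have [a1 a2] := psi_spec hi c; have [b1 b2] := psi_spec (ltnW (ltnW hi)) c.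
apply: (@pos_mono f); rewrite a2 b2 //=; by rewrite negbK.
Qed.

Definition validU n f := forall u, u < n -> f u = false ->
  (if 2 * cnt false f u + 2 < n then cnt false f u + 2 else cnt false f u + 1) <= cnt true f u.
Definition validD n f := forall v, v < n -> f v = true -> 2 * cnt true f v + 1 < n ->
  cnt true f v + 1 <= cnt false f v.
Definition valid d n f := if d then validU n f else validD n f.

Lemma altU_valid n f : counts n f -> Alt n true (PW (psi n f)) -> validU n f.
Proof.
move=> c hA u hu fu; set j := cnt false f u.
have pu : pos f u = 2 * j + 1 by rewrite /pos fu.
have hp := pos_bound c hu; rewrite pu in hp.
case: ifP => hj.
- have [v1 v2] := psi_spec hj c; set v := PW (psi n f) (2 * j + 2) in v1 v2.
  have e2 : pos f v = 2 * (j + 1) by rewrite v2; lia.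
  have [fv cv] := pos_even e2.
  have := hA (2 * j + 1); rewrite (_ : (2 * j + 1).+1 = 2 * j + 2); last lia.
  rewrite hj -pu psi_at // -/v pos_odd negbK => /(_ isT); rewrite fu => /negbT; rewrite -leqNgt.
  rewrite leq_eqVlt => /orP [/eqP e|vu]; first by move: fv; rewrite e fu.
  have := cnt_lt vu fv; lia.
- have h2j : 2 * j < n by lia.
  have [v1 v2] := psi_spec h2j c; set v := PW (psi n f) (2 * j) in v1 v2.
  have [fv cv] := pos_even v2.
  have := hA (2 * j); rewrite (_ : (2 * j).+1 = 2 * j + 1); last lia.
  rewrite hp -pu psi_at // -/v oddM /= => /(_ isT) vu.
  have := cnt_lt vu fv; lia.
Qed.

Lemma half_odd i : odd i -> i = 2 * i./2 + 1.
Proof. move=> oi; have := odd_double_half i; rewrite oi -mul2n /=; lia. Qed.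
Lemma half_even i : ~~ odd i -> i = 2 * i./2.
Proof. move=> /negbTE oi; have := odd_double_half i; rewrite oi -mul2n /=; lia. Qed.

Lemma validU_alt n f : counts n f -> validU n f -> Alt n true (PW (psi n f)).
Proof.
move=> c hV i hi.
have hi' : i < n by lia.
have [u1 u2] := psi_spec hi' c; have [v1 v2] := psi_spec hi c.
set u := PW (psi n f) i in u1 u2 *; set v := PW (psi n f) i.+1 in v1 v2 *.
case: (boolP (odd i)) => oi /=.
- have hj := half_odd oi; set j := i./2 in hj.
  have ee1 : pos f u = 2 * j + 1 by rewrite u2.
  have [fu cu] := pos_oddv ee1.
  have ee7 : pos f v = 2 * (j + 1) by rewrite v2; lia.
  have [fv cv] := pos_even ee7.
  apply/negP => uv; have := cnt_mono true f (ltnW uv); have := hV u u1 fu.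
  rewrite cu; case: ifP => h1 h2; lia.
- have hj := half_even oi; set j := i./2 in hj.
  have ee2 : pos f u = 2 * j by rewrite u2.
  have [fu cu] := pos_even ee2.
  have ee3 : pos f v = 2 * j + 1 by rewrite v2; lia.
  have [fv cv] := pos_oddv ee3.
  rewrite ltnNge; apply/negP => vu; have := cnt_mono true f vu; have := hV v v1 fv.
  rewrite cv; case: ifP => h1 h2; lia.
Qed.

Lemma altD_valid n f : counts n f -> Alt n false (PW (psi n f)) -> validD n f.
Proof.
move=> c hA v hv fv hb; set i := cnt true f v in hb *.
have pv : pos f v = 2 * i by rewrite /pos fv.
have [u1 u2] := psi_spec hb c; set u := PW (psi n f) (2 * i + 1) in u1 u2.
have [fu cu] := pos_oddv u2.
have := hA (2 * i); rewrite (_ : (2 * i).+1 = 2 * i + 1); last lia.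
rewrite hb -pv psi_at // pv oddM /= -/u => /(_ isT) /negbT; rewrite -leqNgt.
rewrite leq_eqVlt => /orP [/eqP e|uv]; first by move: fv; rewrite -e fu.
have := cnt_lt uv fu; lia.
Qed.

Lemma validD_alt n f : counts n f -> validD n f -> Alt n false (PW (psi n f)).
Proof.
move=> c hV i hi.
have hi' : i < n by lia.
have [u1 u2] := psi_spec hi' c; have [v1 v2] := psi_spec hi c.
set u := PW (psi n f) i in u1 u2 *; set v := PW (psi n f) i.+1 in v1 v2 *.
case: (boolP (odd i)) => oi /=.
- have hj := half_odd oi; set j := i./2 in hj.
  have ee4 : pos f u = 2 * j + 1 by rewrite u2.
  have [fu cu] := pos_oddv ee4.
  have ee7 : pos f v = 2 * (j + 1) by rewrite v2; lia.
  have [fv cv] := pos_even ee7.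
  have h2j : 2 * j < n by lia.
  have [w1 w2] := psi_spec h2j c; set w := PW (psi n f) (2 * j) in w1 w2.
  have [fw cw] := pos_even w2.
  have hw := hV w w1 fw; rewrite cw in hw.
  have uw : u < w.
    rewrite ltnNge; apply/negP => wu; have := cnt_mono false f wu; lia.
  have wv : w < v by apply: (@pos_mono f); rewrite w2 v2 ?oddD ?oddM //=; lia.
  by rewrite (ltn_trans uw wv).
- have hj := half_even oi; set j := i./2 in hj.
  have ee5 : pos f u = 2 * j by rewrite u2.
  have [fu cu] := pos_even ee5.
  have ee6 : pos f v = 2 * j + 1 by rewrite v2; lia.
  have [fv cv] := pos_oddv ee6.
  have hu := hV u u1 fu; rewrite cu in hu.
  apply/negP => uv; have := cnt_mono false f (ltnW uv); lia.
Qed.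

Lemma sum_odd n : \sum_(x < n) odd x = n./2.
Proof.
elim: n => [|n IH]; first by rewrite big_ord0.
by rewrite big_ord_recr /= IH ?uphalf_half addnC.
Qed.

Definition fw n (p : 'S_n) (v : nat) : bool := ~~ odd (PW (p^-1)%g v).

Lemma fw_counts n (p : 'S_n) : counts n (fw p).
Proof.
have e : cnt false (fw p) n = n./2.
  rewrite /cnt -sum_odd (reindex_inj (@perm_inj _ p)) /=.
  by apply: eq_bigr => i _; rewrite /fw PW_ord permK; case: (odd _).
rewrite /counts e; have := odd_double_half n; rewrite -mul2n; case: (odd n) => /=; lia.
Qed.

Definition P1 n (p : 'S_n) := forall x y : 'I_n, x < y -> odd x = odd y -> p x < p y.

Lemma perm_unique n (p p' : 'S_n) : P1 p -> P1 p' ->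
  (forall v, odd ((p^-1)%g v) = odd ((p'^-1)%g v)) -> p = p'.
Proof.
move=> h1 h2 hp.
suff H : forall m (v : 'I_n), v < m -> (p^-1)%g v = (p'^-1)%g v.
  apply: invg_inj; apply/permP => v; exact: (H v.+1).
elim=> [//|m IH] v; rewrite ltnS leq_eqVlt => /orP [/eqP ev|]; last exact: IH.
case: (ltngtP (val ((p^-1)%g v)) (val ((p'^-1)%g v))) => h.
- have lt := h2 _ _ h (hp v); rewrite permKV in lt.
  have := IH (p' ((p^-1)%g v)); rewrite -ev => /(_ lt); rewrite permK => e.
  have e2 : p' ((p^-1)%g v) = v by rewrite -[p' _](permKV p) e permKV.
  by move: lt; rewrite e2 ltnn.
- have lt := h1 _ _ h (esym (hp v)); rewrite permKV in lt.
  have := IH (p ((p'^-1)%g v)); rewrite -ev => /(_ lt); rewrite permK => e.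
  have e2 : p ((p'^-1)%g v) = v by apply: (@perm_inj _ (p'^-1)%g); rewrite -e.
  by move: lt; rewrite e2 ltnn.
- by apply: val_inj.
Qed.

Lemma inc_P1 n (p : 'S_n) : Inc n (PW p) -> P1 p.
Proof.
move=> hI.
have key : forall d i, i + 2 * d.+1 < n -> PW p i < PW p (i + 2 * d.+1).
  elim=> [|d IH] i hi; first by rewrite muln1 addn2; apply: hI; rewrite -addn2.
  apply: (ltn_trans (IH i _)); first lia.
  rewrite (_ : i + 2 * d.+2 = (i + 2 * d.+1).+2); last lia.
  apply: hI; lia.
move=> x y xy oxy.
have ev : ~~ odd (y - x) by rewrite oddB ?(ltnW xy) // oxy addbb.
have hh := half_even ev.
have K := key ((y - x)./2).-1 x.
have e : x + 2 * ((y - x)./2).-1.+1 = y.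
  move: hh xy; set h := (y - x)./2; move: (val x) (val y) => a b hh xy.
  clearbody h; rewrite prednK; lia.
rewrite e in K; rewrite -!PW_ord; apply: K; exact: ltn_ord.
Qed.

Lemma psi_P1 n f : counts n f -> P1 (psi n f).
Proof. by move=> c; apply: inc_P1; apply: psi_inc. Qed.

Lemma psi_fw n (p : 'S_n) : Inc n (PW p) -> psi n (fw p) = p.
Proof.
move=> hI; apply: perm_unique; [exact: psi_P1 (fw_counts p)| exact: inc_P1|].
by move=> v; rewrite psi_inv ?fw_counts // pos_odd /fw negbK PW_ord.
Qed.

Lemma psi_ext n f g : (forall v, v < n -> f v = g v) -> psi n f = psi n g.
Proof.
move=> H; rewrite /psi; congr (_^-1)%g.
have ep : forall v, v < n -> pos f v = pos g v.
  move=> v hv; rewrite /pos H // !(@cnt_ext _ f g) // => u hu; apply: H; lia.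
rewrite /mkperm.
have eI : @posI n f =1 @posI n g by move=> v; rewrite /posI ep.
case: injectiveP => [Hf|nf]; case: injectiveP => [Hg|ng].
- by apply/permP => x; rewrite !permE eI.
- by exfalso; apply: ng => x y; rewrite -!eI; apply: Hf.
- by exfalso; apply: nf => x y; rewrite !eI; apply: Hg.
- by [].
Qed.

Lemma psi_parity n f v : counts n f -> v < n -> f v = ~~ odd (PW ((psi n f)^-1)%g v).
Proof. by move=> c hv; rewrite (PWE _ hv) psi_inv // pos_odd negbK. Qed.

Lemma inv_inv n (p : 'S_n) : inv_num p =
  #|[set uv : 'I_n * 'I_n | (uv.1 < uv.2) && ((p^-1)%g uv.2 < (p^-1)%g uv.1)]|.
Proof.
pose sg (ij : 'I_n * 'I_n) := (p ij.2, p ij.1).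
have sinj : injective sg.
  by move=> [a b] [c d] [/perm_inj e1 /perm_inj e2]; rewrite e1 e2.
rewrite /inv_num -(card_imset _ sinj); apply: eq_card => [[u v]].
rewrite inE /=; apply/imsetP/idP.
- move=> [[i j]]; rewrite inE /= => /andP [h1 h2] [-> ->]; by rewrite !permK h2 h1.
- move=> /andP [h1 h2]; exists ((p^-1)%g v, (p^-1)%g u); last by rewrite /sg /= !permKV.
  by rewrite inE /= !permKV h1 h2.
Qed.

Lemma card_sum n (P : 'I_n * 'I_n -> bool) :
  #|[set uv | P uv]| = \sum_(v < n) \sum_(u < n) P (u, v).
Proof.
rewrite exchange_big pair_bigA /= -sum1_card big_mkcond /=.
by apply: eq_bigr => [[u v]] _; rewrite inE; case: (P _).
Qed.

Lemma sum_prefix n v (G : nat -> bool) : v <= n ->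
  \sum_(u < n) ((u < v) && G u) = \sum_(u < v) G u.
Proof.
move=> vn; transitivity (\sum_(0 <= u < n) ((u < v) && G u)); first by rewrite big_mkord.
rewrite (big_cat_nat (leq0n v) vn) /=.
rewrite [X in _ + X]big_nat_cond [X in _ + X]big1 ?addn0; last first.
  by move=> i /andP [/andP [h _] _]; rewrite ltnNge h.
rewrite big_mkord; apply: eq_bigr => i _; by rewrite ltn_ord.
Qed.

Lemma thresh (b : bool) (f : nat -> bool) (c v : nat) : \sum_(u < v) ((f u == b) && (c <= cnt b f u)) = cnt b f v - c.
Proof.
elim: v => [|v IH]; first by rewrite big_ord0 cnt0.
rewrite big_ord_recr /= IH cntS; case: (f v == b); case: (leqP c (cnt b f v)) => /= h; lia.
Qed.

Lemma beq (a b : bool) : (a -> b) -> (b -> a) -> a = b.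
Proof. by case: a; case: b => // h1 h2; [move: (h1 isT)|move: (h2 isT)]. Qed.

Definition incrw f v := if f v then cnt false f v - cnt true f v else cnt true f v - cnt false f v - 1.

Lemma incr_eq f v : \sum_(u < v) (pos f v < pos f u) = incrw f v.
Proof.
rewrite /incrw; case fv: (f v).
- rewrite -thresh; apply: eq_bigr => u _.
  have hu := ltn_ord u; rewrite /pos fv; case fu: (f u) => /=.
  + have := cnt_lt hu fu; lia.
  + congr nat_of_bool; apply: beq => h; lia.
- rewrite (_ : cnt true f v - cnt false f v - 1 = cnt true f v - (cnt false f v).+1); last lia.
  rewrite -thresh; apply: eq_bigr => u _.
  have hu := ltn_ord u; rewrite /pos fv; case fu: (f u) => /=.
  + congr nat_of_bool; apply: beq => h; lia.
  + have := cnt_lt hu fu; lia.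
Qed.

Definition invw n f := \sum_(v < n) incrw f v.

Lemma inv_psi n f : counts n f -> inv_num (psi n f) = invw n f.
Proof.
move=> c; rewrite inv_inv card_sum /invw; apply: eq_bigr => v _ /=.
rewrite -incr_eq -(sum_prefix (fun u => pos f v < pos f u) (ltnW (ltn_ord v))).
by apply: eq_bigr => u _; rewrite !psi_inv.
Qed.

Lemma valid_alt n f d : counts n f -> valid d n f <-> Alt n d (PW (psi n f)).
Proof.
move=> c; case: d; split.
- exact: validU_alt.
- exact: altU_valid.
- exact: validD_alt.
- exact: altD_valid.
Qed.

Lemma class_sum n m (d : bool) (g : (m.*2).-tuple bool -> nat -> bool) (c : nat) :
  1 < n ->
  (forall t : (m.*2).-tuple bool, is_dyck m t -> counts n (g t) /\ valid d n (g t)) ->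
  (forall f, counts n f -> valid d n f -> exists2 t : (m.*2).-tuple bool, is_dyck m t & forall v, v < n -> g t v = f v) ->
  (forall t t' : (m.*2).-tuple bool, is_dyck m t -> is_dyck m t' -> (forall v, v < n -> g t v = g t' v) -> t = t') ->
  (forall t : (m.*2).-tuple bool, is_dyck m t -> invw n (g t) = c + area t) ->
  (\sum_(p : 'S_n | avoids_all PiSet p && (upstart p == d)) 'X^(inv_num p) = 'X^c * Cq m)%R.
Proof.
move=> n1 H1 H2 H3 H4.
pose h t := psi n (g t).
pose DD := [set t : (m.*2).-tuple bool | is_dyck m t].
have hinj : {in DD &, injective h}.
  move=> t t'; rewrite !inE => dt dt' e; apply: H3 => // v hv.
  have [c1 _] := H1 t dt; have [c2 _] := H1 t' dt'.
  by rewrite (psi_parity c1 hv) (psi_parity c2 hv) /h -/(h t) e.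
have seteq : [set p : 'S_n | avoids_all PiSet p && (upstart p == d)] = h @: DD.
  apply/setP => p; rewrite inE; apply/idP/imsetP.
  - move=> /(@classP n p d n1) [hI hA].
    have cf := fw_counts p.
    have vf : valid d n (fw p) by apply/(valid_alt _ cf); rewrite psi_fw.
    have [t dt ht] := H2 _ cf vf.
    exists t; first by rewrite inE.
    by rewrite /h (psi_ext ht) psi_fw.
  - move=> [t]; rewrite inE => dt ->; have [ct vt] := H1 t dt.
    apply/(@classP n _ d n1); split; first exact: psi_inc.
    by apply/(valid_alt _ ct).
rewrite (eq_bigl (fun p => p \in h @: DD)); last by move=> p; rewrite -seteq inE.
rewrite big_imset //= /Cq GRing.mulr_sumr; apply: eq_big => t; first by rewrite inE.
rewrite inE => dt; have [ct _] := H1 t dt.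
by rewrite inv_psi // H4 // GRing.exprD.
Qed.

Lemma cnt_shift b f v : cnt b f v.+1 = (f 0 == b) + cnt b (fun i => f i.+1) v.
Proof. by rewrite /cnt big_ord_recl. Qed.

Lemma count_take_cnt b (s : seq bool) j : j <= size s ->
  count (fun x => x == b) (take j s) = cnt b (nth false s) j.
Proof.
elim: j => [|j IH] hj; first by rewrite take0 cnt0.
by rewrite (take_nth false) // -cats1 count_cat /= addn0 IH ?(ltnW hj) // cntS.
Qed.

Lemma north_take s j : j <= size s -> n_north (take j s) = cnt true (nth false s) j.
Proof.
move=> h; rewrite -count_take_cnt //; apply: eq_count => x; by case: x.
Qed.
Lemma east_take s j : j <= size s -> n_east (take j s) = cnt false (nth false s) j.
Proof.
move=> h; rewrite -count_take_cnt //; apply: eq_count => x; by case: x.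
Qed.

Lemma dyckP m (t : seq bool) : size t = m.*2 -> is_dyck m t <->
  [/\ cnt true (nth false t) m.*2 = m, cnt false (nth false t) m.*2 = m &
      forall j, j <= m.*2 -> cnt false (nth false t) j <= cnt true (nth false t) j].
Proof.
move=> st; rewrite /is_dyck; split.
- move=> /and3P [/eqP h1 /eqP h2 /allP h3]; split.
  + by rewrite -north_take ?st // -st take_size.
  + by rewrite -east_take ?st // -st take_size.
  + move=> j hj; rewrite -north_take -?east_take ?st //; apply: h3.
    by rewrite mem_iota add0n st ltnS hj.
- move=> [h1 h2 h3]; apply/and3P; split.
  + by rewrite -(take_size t) north_take // st h1.
  + by rewrite -(take_size t) east_take // st h2.
  + apply/allP => j; rewrite mem_iota add0n st ltnS => hj.
    by rewrite north_take ?east_take ?st //; apply: h3.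
Qed.

Lemma area_sum s x y : area_aux s x y = \sum_(v < size s)
  (if nth false s v then 0 else (y + cnt true (nth false s) v) - (x + cnt false (nth false s) v).+1).
Proof.
elim: s x y => [|a s IH] x y; first by rewrite big_ord0.
rewrite /= big_ord_recl /=; case: a.
- rewrite IH add0n; apply: eq_bigr => i _; rewrite /= !cnt_shift /=.
  by rewrite !add0n addnA addn1.
- rewrite IH; congr (_ + _); first by rewrite !cnt0 !addn0.
  apply: eq_bigr => i _; rewrite /bump /= !cnt_shift /=.
  by rewrite !add0n addnA addn1.
Qed.

Definition gU m (t : (m.*2).-tuple bool) : nat -> bool := nth false (true :: t).
Definition gD m (t : (m.*2).-tuple bool) : nat -> bool := nth true (map negb t).
Definition mkt m (F : nat -> bool) : (m.*2).-tuple bool :=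
  @Tuple (m.*2) bool (mkseq F m.*2) (introT eqP (size_mkseq F m.*2)).

Lemma mkt_nth m F i : nth false (mkt m F) i = if i < m.*2 then F i else false.
Proof.
case: ifP => h; first by rewrite nth_mkseq.
by rewrite nth_default // size_mkseq leqNgt h.
Qed.

Lemma dyck_step m (t : seq bool) j : size t = m.*2 -> is_dyck m t -> j < m.*2 ->
  cnt false (nth false t) j + (~~ nth false t j) <= cnt true (nth false t) j.
Proof.
move=> st /(dyckP st) [_ _ h3] hj; have := h3 j (ltnW hj); have := h3 j.+1 hj; rewrite !cntS.
by case: (nth false t j) => /=; lia.
Qed.

Lemma dyck_le m (t : seq bool) j : size t = m.*2 -> is_dyck m t -> j <= m.*2 ->
  cnt false (nth false t) j <= cnt true (nth false t) j.
Proof. by move=> st /(dyckP st) [_ _ h3] hj; apply: h3. Qed.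

Lemma gU_cnt b m (t : (m.*2).-tuple bool) j :
  cnt b (gU t) j.+1 = (true == b) + cnt b (nth false t) j.
Proof. by rewrite cnt_shift. Qed.

Lemma gU_last m (t : (m.*2).-tuple bool) : gU t (m.*2).+1 = false.
Proof. by rewrite /gU /= nth_default // size_tuple. Qed.

Lemma up_H1 n m (t : (m.*2).-tuple bool) : (n = m.*2 + 1 \/ n = m.*2 + 2) ->
  is_dyck m t -> counts n (gU t) /\ validU n (gU t).
Proof.
move=> hn dt; have st : size t = m.*2 by rewrite size_tuple.
have [h1 h2 h3] := (dyckP st).1 dt.
split.
- rewrite /counts; case: hn => ->.
  + by rewrite addn1 gU_cnt h2 /=; lia.
  + by rewrite addn2 cntS gU_last gU_cnt h2 /=; lia.
- move=> [|j] hu //= fu.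
  rewrite !gU_cnt /=; rewrite /gU /= in fu.
  case: (ltnP j m.*2) => hj.
  + have := dyck_step st dt hj; rewrite fu /=; case: ifP => hc; lia.
  + have ej : j = m.*2 by case: hn => hn; lia.
    subst j; rewrite h1 h2; case: ifP => hc; lia.
Qed.

Lemma up_H2 n m f : ((n = m.*2 + 1 /\ 0 < m) \/ n = m.*2 + 2) ->
  counts n f -> validU n f ->
  exists2 t : (m.*2).-tuple bool, is_dyck m t & forall v, v < n -> gU t v = f v.
Proof.
move=> hn c hV.
have n2 : 1 < n by case: hn => [[-> ?]|->]; lia.
have f0 : f 0 = true.
  apply: negbNE; apply/negP => /negbTE f0; have := hV 0 (ltnW n2) f0.
  rewrite !cnt0; case: ifP => hc; lia.
have cFn : cnt false f n = if n == m.*2 + 1 then m else m.+1.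
  move: c; rewrite /counts; case: hn => [[-> _]|->]; rewrite ?eqxx; last (case: ifP => /eqP; lia); lia.
have Q : forall u, u <= n -> cnt false f u <= cnt true f u.
  elim=> [|u IH] hu; first by rewrite !cnt0.
  rewrite !cntS; case fu: (f u) => /=; first by have := IH (ltnW hu); lia.
  by have := hV u hu fu; have := IH (ltnW hu); case: ifP => hc; lia.
have flast : n = m.*2 + 2 -> f (m.*2).+1 = false.
  move=> en; apply/negP => fl; move: cFn; rewrite en (_ : m.*2 + 2 = (m.*2).+2) ?addn2 //.
  have hq : (m.*2).+1 <= n by rewrite en addn2.
  rewrite cntS fl /=; have := Q _ hq.
  have := cntTF f (m.*2).+1; case: ifP => /eqP; lia.
have cF2 : cnt false f (m.*2).+1 = m.
  move: cFn; case: hn => [[en _]|en].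
  - by rewrite en addn1 eqxx.
  - rewrite en addn2 cntS flast //=; case: ifP => /eqP; lia.
have P : forall j, j <= m.*2 -> cnt false f j.+1 + 1 <= cnt true f j.+1.
  elim=> [|j IH] hj; first by rewrite !cntS !cnt0 f0.
  rewrite (cntS false) (cntS true); case fu: (f j.+1) => /=; first by have := IH (ltnW hj); lia.
  have hu : j.+1 < n by case: hn => [[-> _]|->]; lia.
  have lt := cnt_lt (_ : j.+1 < (m.*2).+1) fu; rewrite cF2 in lt.
  have := hV j.+1 hu fu; have := IH (ltnW hj); rewrite ifT; last (case: hn => [[-> _]|->]; lia).
  move: (lt hj); lia.
pose F := fun i => f i.+1.
have ecnt : forall b j, j <= m.*2 -> cnt b (nth false (mkt m F)) j = cnt b f j.+1 - (f 0 == b).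
  move=> b j hj; rewrite cnt_shift addKn; apply: cnt_ext => u hu.
  rewrite mkt_nth ifT //; lia.
exists (mkt m F).
- apply/(dyckP (size_tuple _)); split.
  + rewrite ecnt // f0 /=; have := cntTF f (m.*2).+1; lia.
  + by rewrite ecnt // f0 /= cF2 subn0.
  + move=> j hj; rewrite !ecnt // f0 /=; have := P j hj; lia.
- case=> [|j] hj; first by rewrite /gU /= f0.
  rewrite /gU /= mkt_nth; case: ifP => // hj2.
  have en : n = m.*2 + 2 by case: hn => [[en _]|//]; lia.
  have ej : j = m.*2 by lia.
  by rewrite ej flast.
Qed.

Lemma up_H3 n m (t t' : (m.*2).-tuple bool) : m.*2 < n ->
  (forall v, v < n -> gU t v = gU t' v) -> t = t'.
Proof.
move=> hn H; apply: val_inj; apply: (eq_from_nth (x0 := false)); first by rewrite !size_tuple.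
move=> i; rewrite size_tuple => hi; have := H i.+1; rewrite /gU /=; apply; lia.
Qed.

Lemma up_sum m (t : (m.*2).-tuple bool) : is_dyck m t ->
  \sum_(j < m.*2) incrw (gU t) j.+1 = m + area t.
Proof.
move=> dt; have st : size t = m.*2 by rewrite size_tuple.
have [h1 h2 h3] := (dyckP st).1 dt.
rewrite /area area_sum st -[X in _ = X + _]h2 /cnt -big_split /=; apply: eq_bigr => j _.
rewrite /incrw -/(cnt _ _ _) !gU_cnt /= /gU /=.
have := dyck_step st dt (ltn_ord j); have := h3 j (ltnW (ltn_ord j)).
rewrite -/(cnt false (nth false t) j); by case: (nth false t j) => /=; lia.
Qed.

Lemma gD_val m (t : (m.*2).-tuple bool) v : gD t v = if v < m.*2 then ~~ nth false t v else true.
Proof.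
rewrite /gD; case: ifP => h; first by rewrite (nth_map false) // size_tuple.
by rewrite nth_default // size_map size_tuple leqNgt h.
Qed.

Lemma gD_cnt b m (t : (m.*2).-tuple bool) j : j <= m.*2 ->
  cnt b (gD t) j = cnt (~~ b) (nth false t) j.
Proof.
move=> hj; rewrite /cnt; apply: eq_bigr => u _; have hu := ltn_ord u; rewrite gD_val ifT; last lia.
by case: b; case: (nth false t u).
Qed.

Lemma down_H1 n m (t : (m.*2).-tuple bool) : (n = m.*2 + 1 \/ n = m.*2) ->
  is_dyck m t -> counts n (gD t) /\ validD n (gD t).
Proof.
move=> hn dt; have st : size t = m.*2 by rewrite size_tuple.
have [h1 h2 h3] := (dyckP st).1 dt.
split.
- rewrite /counts; case: hn => ->.
  + rewrite addn1 cntS gD_cnt // gD_val ltnn /= h1; lia.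
  + rewrite gD_cnt // h1; lia.
- move=> v hv fv; rewrite gD_val in fv; rewrite !gD_cnt /=; last 2 first.
  + case: hn => hn; lia.
  + case: hn => hn; lia.
  move: fv; case: ifP => hvm fv.
  + have := dyck_step st dt hvm; rewrite fv /=; lia.
  + have ev : v = m.*2 by case: hn => hn; lia.
    subst v; rewrite h2; case: hn => hn; lia.
Qed.

Lemma down_H2 n m f : ((n = m.*2 + 1) \/ n = m.*2) ->
  counts n f -> validD n f ->
  exists2 t : (m.*2).-tuple bool, is_dyck m t & forall v, v < n -> gD t v = f v.
Proof.
move=> hn c hV.
have Q : forall u, u <= m.*2 -> cnt true f u <= cnt false f u.
  elim=> [|u IH] hu; first by rewrite !cnt0.
  rewrite !cntS; case fu: (f u) => /=; last by have := IH (ltnW hu); lia.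
  have := IH (ltnW hu); have := cntTF f u => e1 e2.
  have hu' : u < n by case: hn => ->; lia.
  have hb : 2 * cnt true f u + 1 < n by case: hn => ->; lia.
  have := hV u hu' fu hb; lia.
have flast : n = m.*2 + 1 -> f m.*2 = true.
  move=> en; apply/negP => /negP /negbTE fl; move: c; rewrite /counts en addn1 cntS fl /=.
  have := Q _ (leqnn _); have := cntTF f m.*2; lia.
have cF2 : cnt false f m.*2 = m.
  move: c; rewrite /counts; case: hn => en; last by rewrite en; lia.
  by rewrite en addn1 cntS flast //= addn0; lia.
pose F := fun i => ~~ f i.
have ecnt : forall b j, j <= m.*2 -> cnt b (nth false (mkt m F)) j = cnt (~~ b) f j.
  move=> b j hj; apply: eq_bigr => u _; have hu := ltn_ord u; rewrite mkt_nth ifT; last lia.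
  by rewrite /F; case: b; case: (f u).
exists (mkt m F).
- apply/(dyckP (size_tuple _)); split.
  + by rewrite ecnt.
  + by rewrite ecnt //=; have := cntTF f m.*2; lia.
  + by move=> j hj; rewrite !ecnt //=; apply: Q.
- move=> v hv; rewrite gD_val; case: ifP => h.
  + by rewrite mkt_nth h /F negbK.
  + have en : n = m.*2 + 1 by case: hn => en; lia.
    have ev : v = m.*2 by lia.
    by rewrite ev flast.
Qed.

Lemma down_H3 n m (t t' : (m.*2).-tuple bool) : m.*2 <= n ->
  (forall v, v < n -> gD t v = gD t' v) -> t = t'.
Proof.
move=> hn H; apply: val_inj; apply: (eq_from_nth (x0 := false)); first by rewrite !size_tuple.
move=> i; rewrite size_tuple => hi; have := H i; rewrite !gD_val hi => h.
by apply: negb_inj; apply: h; lia.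
Qed.

Lemma down_sum m (t : (m.*2).-tuple bool) : is_dyck m t ->
  \sum_(j < m.*2) incrw (gD t) j = m + area t.
Proof.
move=> dt; have st : size t = m.*2 by rewrite size_tuple.
have [h1 h2 h3] := (dyckP st).1 dt.
rewrite /area area_sum st -[X in _ = X + _]h2 /cnt -big_split /=; apply: eq_bigr => j _.
have hj := ltn_ord j.
rewrite /incrw -/(cnt _ _ _) !gD_cnt ?(ltnW hj) // gD_val hj /=.
have := dyck_step st dt hj; have := h3 j (ltnW hj).
rewrite -/(cnt false (nth false t) j); by case: (nth false t j) => /=; lia.
Qed.

Lemma sum_OU n m : 0 < m -> n = m.*2 + 1 ->
  (\sum_(p : 'S_n | avoids_all PiSet p && (upstart p == true)) 'X^(inv_num p) = 'X^m * Cq m)%R.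
Proof.
move=> hm hn; apply: (class_sum (g := @gU m) (c := m)).
- lia.
- by move=> t dt; apply: up_H1 (or_introl hn) dt.
- by move=> f c v; apply: up_H2 (or_introl (conj hn hm)) c v.
- by move=> t t' _ _; apply: up_H3; lia.
- move=> t dt; rewrite /invw hn addn1 big_ord_recl /= -(up_sum dt).
  by rewrite /incrw /gU /= !cnt0 add0n.
Qed.

Lemma sum_EU n m : n = m.*2 + 2 ->
  (\sum_(p : 'S_n | avoids_all PiSet p && (upstart p == true)) 'X^(inv_num p) = 'X^m * Cq m)%R.
Proof.
move=> hn; apply: (class_sum (g := @gU m) (c := m)).
- lia.
- by move=> t dt; apply: up_H1 (or_intror hn) dt.
- by move=> f c v; apply: up_H2 (or_intror hn) c v.
- by move=> t t' _ _; apply: up_H3; lia.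
- move=> t dt; rewrite /invw hn addn2 big_ord_recr big_ord_recl /= -(up_sum dt).
  rewrite {1 3}/incrw /gU /= !cnt0 add0n.
  have st : size t = m.*2 by rewrite size_tuple.
  have [h1 h2 _] := (dyckP st).1 dt.
  rewrite (nth_default _ (_ : size t <= m.*2)); last by rewrite st.
  rewrite !(gU_cnt _ t) /= h1 h2 (_ : 1 + m - m - 1 = 0) ?addn0; last lia.
  by apply: eq_bigr => i _; rewrite /bump.
Qed.

Lemma sum_OD n m : 0 < m -> n = m.*2 + 1 ->
  (\sum_(p : 'S_n | avoids_all PiSet p && (upstart p == false)) 'X^(inv_num p) = 'X^m * Cq m)%R.
Proof.
move=> hm hn; apply: (class_sum (g := @gD m) (c := m)).
- lia.
- by move=> t dt; apply: down_H1 (or_introl hn) dt.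
- by move=> f c v; apply: down_H2 (or_introl hn) c v.
- by move=> t t' _ _; apply: down_H3; lia.
- move=> t dt; rewrite /invw hn addn1 big_ord_recr /= -(down_sum dt).
  rewrite {2}/incrw gD_val ltnn /= !gD_cnt //=.
  have st : size t = m.*2 by rewrite size_tuple.
  have [h1 h2 _] := (dyckP st).1 dt.
  by rewrite h1 h2 subnn addn0.
Qed.

Lemma sum_ED n m : 0 < m -> n = m.*2 ->
  (\sum_(p : 'S_n | avoids_all PiSet p && (upstart p == false)) 'X^(inv_num p) = 'X^m * Cq m)%R.
Proof.
move=> hm hn; apply: (class_sum (g := @gD m) (c := m)).
- lia.
- by move=> t dt; apply: down_H1 (or_intror hn) dt.
- by move=> f c v; apply: down_H2 (or_intror hn) c v.
- by move=> t t' _ _; apply: down_H3; lia.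
- by move=> t dt; rewrite /invw hn -(down_sum dt).
Qed.

Lemma Ipoly_split n : (Ipoly PiSet n =
  \sum_(p : 'S_n | avoids_all PiSet p && (upstart p == true)) 'X^(inv_num p) +
  \sum_(p : 'S_n | avoids_all PiSet p && (upstart p == false)) 'X^(inv_num p))%R.
Proof.
rewrite /Ipoly (bigID (fun p => upstart p)) /=.
by congr (_ + _)%R; apply: eq_bigl => p; case: (upstart p).
Qed.


Local Open Scope ring_scope.

Theorem mainTheorem7 (k : nat) (hk : (1 <= k)%N) :
  Ipoly PiSet (2 * k + 1) = 2 * ('X^k * Cq k)
  /\ Ipoly PiSet (2 * k) = 'X^(k - 1) * Cq (k - 1) + 'X^k * Cq k.
Proof.
split.
- rewrite Ipoly_split (sum_OU hk) ?(sum_OD hk) -?mul2n //.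
  by rewrite mulr_natl mulr2n.
- rewrite Ipoly_split (sum_ED hk) -?mul2n // (@sum_EU _ (k - 1)) //.
  rewrite -mul2n; lia.
Qed.
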